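(* Fix $\varepsilon>0$, $\delta\in(0,1)$, an even integer $d>4(e^{2\varepsilon}-1)^2\ln(12e^{\varepsilon}n/\delta)$, and $\varepsilon$-private randomizers $R_1,\dots,R_n:[d]\to\mathcal Y$. If $H$ is chosen uniformly among subsets of $[d]$ of size $d/2$, then with probability greater than $2/3$ over $H$, every randomizer $Q_{H,R_i}$, $i\in[n]$, is $(\varepsilon',\delta)$-private, where \[ \varepsilon'=(e^{2\varepsilon}-1)\sqrt{\frac{16}{d}\ln\left(24e^{\varepsilon}n/\delta\right)} . \]
   Context: $\mathcal Y$ is a countable message set. A randomizer $R:\mathcal X\to\mathcal Y$ is $(\varepsilon,\delta)$-private if for all $x,x'\in\mathcal X$ and all $Y\subseteq\mathcal Y$, $\Pr[R(x)\in Y]\le e^{\varepsilon}\Pr[R(x')\in Y]+\delta$; it is $\varepsilon$-private if this holds with $\delta=0$. $\mathbf U_H$ is the uniform distribution on $H\subseteq[d]$, $\overline H=[d]\setminus H$, and $R(\mathbf U_H)$ is the distribution of $R(\hat x)$ with $\hat x\sim\mathbf U_H$. For $H\subset[d]$ with $|H|=d/2$ and a randomizer $R:[d]\to\mathcal Y$, $Q_{H,R}:\{\pm1\}\to\mathcal Y$ is the randomizer that on input $+1$ outputs a sample of $R(\mathbf U_H)$ and on input $-1$ outputs a sample of $R(\mathbf U_{\overline H})$. *)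

(* Defs.v *)
From Stdlib Require Import Reals Lra List Arith Bool ClassicalEpsilon.
Import ListNotations.
Open Scope R_scope.

(* The countable message set Y is represented by nat (any countable set
   embeds in nat; extra messages get probability 0). A distribution on Y
   is a probability mass function p : nat -> R. *)
Definition is_dist (p : nat -> R) : Prop :=
  (forall y, 0 <= p y) /\ infinite_sum p 1.

Definition restrict (p : nat -> R) (S : nat -> Prop) : nat -> R :=
  fun y => if excluded_middle_informative (S y) then p y else 0.

Definition PrIs (p : nat -> R) (S : nat -> Prop) (a : R) : Prop :=
  infinite_sum (restrict p S) a.

Definition private {X : Type} (D : X -> Prop) (Q : X -> nat -> R)
  (eps delta : R) : Prop :=
  forall x x', D x -> D x' ->
  forall (S : nat -> Prop) (a b : R),
    PrIs (Q x) S a -> PrIs (Q x') S b -> a <= exp eps * b + delta.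

Definition in_range (d : nat) : nat -> Prop := fun x => (x < d)%nat.

Definition randomizer (d : nat) (Rz : nat -> nat -> R) : Prop :=
  forall x, (x < d)%nat -> is_dist (Rz x).

(* Subsets H of [d] are represented by their characteristic lists of
   length d: x \in H iff nth x H false = true. *)
Definition memH (H : list bool) (x : nat) : bool := nth x H false.

Fixpoint bool_lists (d : nat) : list (list bool) :=
  match d with
  | O => [nil]
  | S d' => map (cons true) (bool_lists d') ++ map (cons false) (bool_lists d')
  end.

Definition half_subsets (d : nat) : list (list bool) :=
  filter (fun H => Nat.eqb (count_occ bool_dec H true) (Nat.div d 2))
         (bool_lists d).

Definition decP {A : Type} (P : A -> Prop) (a : A) : bool :=
  if excluded_middle_informative (P a) then true else false.

Definition prob_H (d : nat) (P : list bool -> Prop) : R :=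
  INR (length (filter (decP P) (half_subsets d))) /
  INR (length (half_subsets d)).

Definition sum_d (d : nat) (f : nat -> R) : R :=
  fold_right (fun x acc => f x + acc) 0 (seq 0 d).

(* The distribution of Rz(x^), x^ uniform on the subset of [d] where
   memH H = b (b = true: H; b = false: complement of H). *)
Definition mixture (d : nat) (H : list bool) (b : bool) (Rz : nat -> nat -> R)
  : nat -> R :=
  fun y =>
    sum_d d (fun x => if Bool.eqb (memH H x) b then Rz x y else 0) /
    INR (length (filter (fun x => Bool.eqb (memH H x) b) (seq 0 d))).

(* Q_{H,R} : {+1,-1} -> Y, with +1 encoded as true and -1 as false. *)
Definition Q_HR (d : nat) (H : list bool) (Rz : nat -> nat -> R) : bool -> nat -> R :=
  fun s => mixture d H s Rz.

(* Main.v *)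
Require Import Defs.
From Stdlib Require Import Reals Arith.
From Stdlib Require Import Lra Lia List Bool ClassicalEpsilon.
From Coquelicot Require Import Coquelicot.
Import ListNotations.
Open Scope R_scope.


Lemma exp_le_exp x y : x <= y -> exp x <= exp y.
Proof. intros [H|H]; [left; now apply exp_increasing|subst; lra]. Qed.

Lemma incr_from0 (f f' : R -> R) (u : R) : 0 <= u ->
  (forall c, 0 <= c <= u -> is_derive f c (f' c)) ->
  (forall c, 0 <= c <= u -> 0 <= f' c) -> f 0 <= f u.
Proof.
  intros Hu Hd Hp. destruct (Req_dec u 0) as [->|Hne]; [lra|].
  destruct (MVT_cor2 f f' 0 u) as [c [Hc1 Hc2]]; [lra| |].
  - intros c Hc. apply is_derive_Reals. apply Hd; lra.
  - assert (0 <= f' c) by (apply Hp; lra). nra.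
Qed.

Lemma cosh_le_pos (u : R) : 0 <= u -> (exp u + exp (-u)) / 2 <= exp (u*u/2).
Proof.
  intros Hu.
  assert (Hpsi : forall v, 0 <= v -> (exp v - exp (-v)) / 2 <= v * ((exp v + exp (-v)) / 2)).
  { intros v Hv.
    pose (f := fun x => x * ((exp x + exp (-x)) / 2) - (exp x - exp (-x)) / 2).
    assert (f 0 <= f v).
    { apply (incr_from0 f (fun x => x * ((exp x - exp (-x)) / 2))); auto.
      - intros c _. unfold f. auto_derive; auto. lra.
      - intros c Hc. apply Rmult_le_pos; [lra|].
        assert (exp (-c) <= exp c) by (apply exp_le_exp; lra). lra. }
    unfold f in H. rewrite Rmult_0_l, Ropp_0, exp_0 in H. lra. }
  pose (g := fun x => x*x/2 - ln ((exp x + exp (-x)) / 2)).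
  assert (g 0 <= g u).
  { apply (incr_from0 g (fun x => x - ((exp x - exp (-x)) / 2) / ((exp x + exp (-x)) / 2))); auto.
    - intros c _. unfold g. auto_derive.
      + pose proof (exp_pos c); pose proof (exp_pos (-c)); lra.
      + pose proof (exp_pos c); pose proof (exp_pos (-c)). field. lra.
    - intros c Hc. pose proof (Hpsi c (proj1 Hc)).
      pose proof (exp_pos c); pose proof (exp_pos (-c)).
      assert (((exp c - exp (- c)) / 2) / ((exp c + exp (- c)) / 2) <= c).
      { apply (Rmult_le_reg_r ((exp c + exp (- c)) / 2)). lra.
        unfold Rdiv at 1. rewrite Rmult_assoc, Rinv_l by lra. lra. }
      lra. }
  unfold g in H. rewrite Rmult_0_l, Ropp_0, exp_0 in H.
  replace ((1+1)/2) with 1 in H by field. rewrite ln_1 in H.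
  assert (ln ((exp u + exp (- u)) / 2) <= u*u/2) by lra.
  pose proof (exp_pos u); pose proof (exp_pos (-u)).
  rewrite <- (exp_ln ((exp u + exp (- u)) / 2)) by lra.
  apply exp_le_exp. lra.
Qed.

Lemma hoeff_half (z : R) : (1 + exp z) / 2 <= exp (z/2 + z*z/8).
Proof.
  assert (E : (1 + exp z)/2 = exp (z/2) * ((exp (z/2) + exp (-(z/2)))/2)).
  { assert (A1 : exp (z/2) * exp (z/2) = exp z) by (rewrite <- exp_plus; f_equal; field).
    assert (A2 : exp (z/2) * exp (-(z/2)) = 1) by (rewrite <- exp_plus; replace (z/2 + - (z/2)) with 0 by ring; apply exp_0).
    rewrite Rmult_comm. unfold Rdiv. rewrite Rmult_assoc, Rmult_plus_distr_r.
    rewrite (Rmult_comm _ (exp (z/2))). lra. }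
  rewrite E. rewrite exp_plus. apply Rmult_le_compat_l. left; apply exp_pos.
  destruct (Rle_dec 0 (z/2)) as [Hp|Hn].
  - replace (z*z/8) with ((z/2)*(z/2)/2) by field. now apply cosh_le_pos.
  - replace (z*z/8) with ((-(z/2))*(-(z/2))/2) by field.
    rewrite Rplus_comm. rewrite <- (Ropp_involutive (z/2)) at 2.
    apply cosh_le_pos. lra.
Qed.


Definition shift (f : nat -> R) : nat -> R := fun x => f (S x).

Definition sumL {A : Type} (L : list A) (f : A -> R) : R :=
  fold_right (fun a acc => f a + acc) 0 L.

Lemma sumL_app {A} (l1 l2 : list A) f : sumL (l1 ++ l2) f = sumL l1 f + sumL l2 f.
Proof. induction l1; simpl; [ring|]. unfold sumL in *. simpl. rewrite IHl1. ring. Qed.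

Lemma sumL_ext {A} (L : list A) f g : (forall a, In a L -> f a = g a) -> sumL L f = sumL L g.
Proof. induction L; simpl; intros H; auto. unfold sumL in *; simpl. rewrite H, IHL; auto. Qed.

Lemma sumL_le {A} (L : list A) f g : (forall a, In a L -> f a <= g a) -> sumL L f <= sumL L g.
Proof. induction L; simpl; intros H; unfold sumL in *; simpl; [lra|].
  apply Rplus_le_compat; auto. Qed.

Lemma sumL_nonneg {A} (L : list A) f : (forall a, In a L -> 0 <= f a) -> 0 <= sumL L f.
Proof. induction L; unfold sumL in *; simpl; intros H; [lra|].
  apply Rplus_le_le_0_compat; auto. Qed.

Lemma sumL_plus {A} (L : list A) f g : sumL L (fun a => f a + g a) = sumL L f + sumL L g.
Proof. induction L; unfold sumL in *; simpl; [ring|]. rewrite IHL. ring. Qed.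

Lemma sumL_scal {A} (L : list A) f c : sumL L (fun a => c * f a) = c * sumL L f.
Proof. induction L; unfold sumL in *; simpl; [ring|]. rewrite IHL. ring. Qed.

Lemma sumL_const1 {A} (L : list A) : sumL L (fun _ => 1) = INR (length L).
Proof. induction L; unfold sumL in *; simpl; [reflexivity|]. unfold sumL in IHL; rewrite IHL.
  destruct (length L); simpl; ring. Qed.

Lemma sumL_filter_map (p : list bool -> bool) (b : bool) (L : list (list bool)) (F : list bool -> R) :
  sumL (filter p (map (cons b) L)) F = sumL (filter (fun H => p (b :: H)) L) (fun H => F (b :: H)).
Proof. induction L; simpl; auto. destruct (p (b :: a)); unfold sumL in *; simpl; rewrite IHL; auto. Qed.

Lemma count_le {A} (L : list A) (p : A -> bool) (f : A -> R) (B : R) :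
  (forall a, In a L -> 0 <= f a) -> (forall a, In a L -> p a = true -> B <= f a) ->
  INR (length (filter p L)) * B <= sumL L f.
Proof.
  induction L; intros H1 H2; unfold sumL in *; [simpl; lra|].
  specialize (IHL (fun x h => H1 x (or_intror h)) (fun x h => H2 x (or_intror h))).
  cbn [filter fold_right]. destruct (p a) eqn:E.
  - replace (length (a :: filter p L)) with (S (length (filter p L))) by reflexivity.
    rewrite S_INR. assert (B <= f a) by (apply H2; simpl; auto). lra.
  - assert (0 <= f a) by (apply H1; simpl; auto). lra.
Qed.

Fixpoint prodH (H : list bool) (g : nat -> R) : R :=
  match H with
  | [] => 1
  | b :: H' => (if b then g 0%nat else 1) * prodH H' (shift g)
  end.

Definition subk (d k : nat) : list (list bool) :=
  filter (fun H => Nat.eqb (count_occ bool_dec H true) k) (bool_lists d).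

Definition EE (d k : nat) (g : nat -> R) : R := sumL (subk d k) (fun H => prodH H g).

Lemma EE_0_0 g : EE 0 0 g = 1.
Proof. unfold EE, subk, sumL; simpl. ring. Qed.
Lemma EE_0_S k g : EE 0 (S k) g = 0.
Proof. unfold EE, subk, sumL; simpl. reflexivity. Qed.

Lemma EE_S_0 d g : EE (S d) 0 g = EE d 0 (shift g).
Proof.
  unfold EE, subk. simpl. rewrite filter_app, sumL_app, !sumL_filter_map.
  simpl. replace (sumL (filter (fun _ => false) (bool_lists d)) _) with 0.
  2:{ induction (bool_lists d); simpl; auto. }
  rewrite Rplus_0_l. apply sumL_ext. intros; ring.
Qed.

Lemma EE_S_S d k g : EE (S d) (S k) g = g 0%nat * EE d k (shift g) + EE d (S k) (shift g).
Proof.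
  unfold EE, subk. simpl. rewrite filter_app, sumL_app, !sumL_filter_map.
  simpl. f_equal.
  - rewrite <- sumL_scal. apply sumL_ext. intros; ring.
  - apply sumL_ext. intros; ring.
Qed.

Fixpoint binom (n k : nat) : R :=
  match n, k with
  | _, O => 1
  | O, S _ => 0
  | S n', S k' => binom n' k' + binom n' (S k')
  end.

Lemma binom_S_S n k : binom (S n) (S k) = binom n k + binom n (S k).
Proof. reflexivity. Qed.

Lemma binom_gt n k : (n < k)%nat -> binom n k = 0.
Proof. revert k; induction n; intros k H; destruct k; simpl; try lia; auto.
  rewrite !IHn by lia. ring. Qed.

Lemma binom_nonneg n k : 0 <= binom n k.
Proof. revert k; induction n; intros k; destruct k; simpl; try lra.
  pose proof (IHn k); pose proof (IHn (S k)). lra. Qed.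

Lemma binom_n0 n : binom n 0 = 1.
Proof. destruct n; reflexivity. Qed.

Lemma binom_absorb n j : binom (S n) (S j) * INR (S j) = INR (S n) * binom n j.
Proof.
  revert j; induction n; intros j.
  - destruct j; [simpl; ring|]. rewrite (binom_gt 0 (S j)) by lia. simpl. ring.
  - destruct j.
    + pose proof (IHn 0%nat) as H. rewrite binom_n0 in *. rewrite binom_S_S, binom_n0.
      rewrite (S_INR (S n)). simpl INR in *. lra.
    + pose proof (IHn j) as H1. pose proof (IHn (S j)) as H2.
      rewrite binom_S_S.
      replace (INR (S (S j))) with (INR (S j) + 1) in * by (rewrite (S_INR (S j)); ring).
      transitivity (binom (S n) (S j) * INR (S j) + binom (S n) (S j) + binom (S n) (S (S j)) * (INR (S j) + 1)); [ring|].
      rewrite H1, H2. rewrite (binom_S_S n j). rewrite (S_INR (S n)). ring.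
Qed.

Lemma binom_pos n k : (k <= n)%nat -> 0 < binom n k.
Proof. revert k; induction n; intros k H; destruct k; simpl; try lra; try lia.
  pose proof (IHn k ltac:(lia)). pose proof (binom_nonneg n (S k)). lra. Qed.

Lemma EE_one d k : EE d k (fun _ => 1) = binom d k.
Proof.
  revert k; induction d; intros k.
  - destruct k; [apply EE_0_0|apply EE_0_S].
  - destruct k.
    + rewrite EE_S_0. unfold shift. rewrite IHd, !binom_n0. reflexivity.
    + rewrite EE_S_S. unfold shift. rewrite !IHd. simpl. ring.
Qed.

Lemma prodH_one H : prodH H (fun _ => 1) = 1.
Proof. induction H; simpl; auto. unfold shift. rewrite IHlist. destruct a; ring. Qed.

Lemma length_subk d k : INR (length (subk d k)) = binom d k.
Proof. rewrite <- EE_one, <- sumL_const1. unfold EE. apply sumL_ext. intros; now rewrite prodH_one. Qed.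

Lemma sum_d_S n f : sum_d (S n) f = f 0%nat + sum_d n (shift f).
Proof.
  unfold sum_d. simpl. f_equal. rewrite <- seq_shift.
  unfold shift. generalize (seq 0 n). intros l; induction l; simpl; auto. rewrite IHl; auto.
Qed.

Lemma sum_d_Sr n f : sum_d (S n) f = sum_d n f + f n.
Proof.
  unfold sum_d. rewrite seq_S, fold_right_app. simpl.
  rewrite Rplus_0_r. generalize (f n). generalize (seq 0 n). intros l; induction l; intros r; simpl; [lra|].
  rewrite IHl. ring.
Qed.

Lemma sum_d_0 f : sum_d 0 f = 0.
Proof. reflexivity. Qed.

Lemma sum_d_ext n f g : (forall x, (x < n)%nat -> f x = g x) -> sum_d n f = sum_d n g.
Proof. induction n; intros H; [reflexivity|]. rewrite !sum_d_Sr, IHn, H; auto; intros; apply H; lia. Qed.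

Lemma sum_d_le n f g : (forall x, (x < n)%nat -> f x <= g x) -> sum_d n f <= sum_d n g.
Proof. induction n; intros H; [unfold sum_d; simpl; lra|]. rewrite !sum_d_Sr.
  apply Rplus_le_compat; [apply IHn; intros; apply H; lia|apply H; lia]. Qed.

Lemma sum_d_plus n f g : sum_d n (fun x => f x + g x) = sum_d n f + sum_d n g.
Proof. induction n; [unfold sum_d; simpl; ring|]. rewrite !sum_d_Sr, IHn. ring. Qed.

Lemma sum_d_scal n f c : sum_d n (fun x => c * f x) = c * sum_d n f.
Proof. induction n; [unfold sum_d; simpl; ring|]. rewrite !sum_d_Sr, IHn. ring. Qed.

Lemma sum_d_nonneg n f : (forall x, (x < n)%nat -> 0 <= f x) -> 0 <= sum_d n f.
Proof. induction n; intros H; [unfold sum_d; simpl; lra|]. rewrite !sum_d_Sr.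
  apply Rplus_le_le_0_compat; [apply IHn; intros; apply H; lia|apply H; lia]. Qed.

Lemma sum_d_zero n : sum_d n (fun _ => 0) = 0.
Proof. induction n; [reflexivity|]. rewrite sum_d_Sr, IHn. ring. Qed.

Fixpoint esym (d : nat) (v : nat -> R) (t : nat) : R :=
  match d, t with
  | _, O => 1
  | O, S _ => 0
  | S d', S t' => v 0%nat * esym d' (shift v) t' + esym d' (shift v) (S t')
  end.

Lemma esym_0 d v : esym d v 0 = 1.
Proof. destruct d; reflexivity. Qed.

Lemma esym_gt d v t : (d < t)%nat -> esym d v t = 0.
Proof. revert v t; induction d; intros v t H; destruct t; simpl; try lia; auto.
  rewrite !IHd by lia. ring. Qed.

Lemma esym_nonneg d v t : (forall x, (x < d)%nat -> 0 <= v x) -> 0 <= esym d v t.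
Proof. revert v t; induction d; intros v t H; destruct t; simpl; try lra.
  assert (0 <= v 0%nat) by (apply H; lia).
  assert (forall x, (x < d)%nat -> 0 <= shift v x) by (intros; apply H; lia).
  pose proof (IHd (shift v) t H1). pose proof (IHd (shift v) (S t) H1). nra. Qed.

Definition cf (d t k : nat) : R := if Nat.leb t k then binom (d - t) (k - t) else 0.

Lemma cf_pascal d t k : (t < d)%nat -> cf d t k = cf d (S t) k + cf d (S t) (S k).
Proof.
  intros Ht. unfold cf. replace (Nat.leb (S t) (S k)) with (Nat.leb t k) by reflexivity.
  replace (S k - S t)%nat with (k - t)%nat by reflexivity.
  destruct (Nat.leb_spec t k); destruct (Nat.leb_spec (S t) k); try lia.
  - replace (d - t)%nat with (S (d - S t)) by lia.
    replace (k - t)%nat with (S (k - S t)) by lia. rewrite binom_S_S. ring.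
  - assert (k = t) by lia. subst.
    replace (t - t)%nat with 0%nat by lia. rewrite !binom_n0. ring.
  - ring.
Qed.

Lemma EE_identity d k v :
  EE d k (fun x => 1 + v x) = sum_d (S d) (fun t => cf d t k * esym d v t).
Proof.
  revert k v; induction d; intros k v.
  - rewrite sum_d_S, sum_d_0. unfold cf. simpl. destruct k; [rewrite EE_0_0 | rewrite EE_0_S]; simpl; ring.
  - destruct k.
    + rewrite EE_S_0. 
      replace (shift (fun x => 1 + v x)) with (fun x => 1 + shift v x) by reflexivity.
      rewrite IHd. rewrite sum_d_S. rewrite (sum_d_S (S d)).
      rewrite (sum_d_ext _ (shift (fun t => cf (S d) t 0 * esym (S d) v t)) (fun _ => 0)).
      2:{ intros x _. unfold shift, cf. simpl. ring. }
      rewrite (sum_d_ext _ (shift (fun t => cf d t 0 * esym d (shift v) t)) (fun _ => 0)).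
      2:{ intros x _. unfold shift, cf. simpl. ring. }
      unfold cf. simpl Nat.leb. rewrite !Nat.sub_0_r, !binom_n0, !esym_0, !sum_d_zero. ring.
    + rewrite EE_S_S.
      replace (shift (fun x => 1 + v x)) with (fun x => 1 + shift v x) by reflexivity.
      rewrite !IHd. rewrite (sum_d_S (S d)).
      set (e' := esym d (shift v)).
      replace (shift (fun t => cf (S d) t (S k) * esym (S d) v t))
        with (fun t => cf d t k * (v 0%nat * e' t + e' (S t))) by reflexivity.
      rewrite (sum_d_ext (S d) (fun t => cf d t k * (v 0%nat * e' t + e' (S t)))
         (fun t => v 0%nat * (cf d t k * e' t) + cf d t k * e' (S t))) by (intros; ring).
      rewrite sum_d_plus, sum_d_scal.
      replace (cf (S d) 0 (S k) * esym (S d) v 0) with (binom d k + binom d (S k))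
        by (unfold cf; rewrite esym_0; replace (Nat.leb 0 (S k)) with true by reflexivity; replace (S d - 0)%nat with (S d) by reflexivity; replace (S k - 0)%nat with (S k) by reflexivity; rewrite binom_S_S; ring).
      assert (Key : binom d k + binom d (S k) + sum_d (S d) (fun t => cf d t k * e' (S t))
         = sum_d (S d) (fun t => cf d t k * e' t) + sum_d (S d) (fun t => cf d t (S k) * e' t)).
      { rewrite <- sum_d_plus. rewrite (sum_d_Sr d (fun t => cf d t k * e' (S t))).
        rewrite (sum_d_S d (fun x => cf d x k * e' x + cf d x (S k) * e' x)).
        unfold e'. rewrite (esym_gt d (shift v) (S d)) by lia. rewrite esym_0.
        replace (cf d 0 k) with (binom d k) by (unfold cf; replace (Nat.leb 0 k) with true by (destruct k; reflexivity); rewrite !Nat.sub_0_r; reflexivity).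
        replace (cf d 0 (S k)) with (binom d (S k)) by (unfold cf; replace (Nat.leb 0 (S k)) with true by reflexivity; rewrite !Nat.sub_0_r; reflexivity).
        assert (sum_d d (fun t => cf d t k * esym d (shift v) (S t)) = sum_d d
          (shift (fun x => cf d x k * esym d (shift v) x + cf d x (S k) * esym d (shift v) x))).
        { apply sum_d_ext. intros x Hx. unfold shift. rewrite (cf_pascal d x k Hx). ring. }
        rewrite H. ring. }
      lra.
Qed.

Lemma Rdiv_le_0_compat a b : 0 <= a -> 0 < b -> 0 <= a / b.
Proof. intros. unfold Rdiv. apply Rmult_le_pos; auto. left; apply Rinv_0_lt_compat; auto. Qed.

Lemma Rdiv_le_cross a b c e : 0 < b -> 0 < e -> a * e <= c * b -> a / b <= c / e.
Proof. intros Hb He H. apply (Rmult_le_reg_r (b * e)); [nra|].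
  replace (a / b * (b * e)) with (a * e) by (field; lra).
  replace (c / e * (b * e)) with (c * b) by (field; lra). lra. Qed.

Definition prod_d (n : nat) (f : nat -> R) : R :=
  fold_right (fun x acc => f x * acc) 1 (seq 0 n).

Lemma prod_d_S n f : prod_d (S n) f = f 0%nat * prod_d n (shift f).
Proof.
  unfold prod_d. simpl. f_equal. rewrite <- seq_shift.
  unfold shift. generalize (seq 0 n). intros l; induction l; simpl; auto. rewrite IHl; auto.
Qed.

Lemma esym_gen d v p :
  sum_d (S d) (fun t => p ^ t * esym d v t) = prod_d d (fun x => 1 + p * v x).
Proof.
  revert v; induction d; intros v.
  - rewrite sum_d_S, sum_d_0. unfold prod_d. simpl. ring.
  - rewrite prod_d_S. rewrite sum_d_S. set (e' := esym d (shift v)).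
    replace (shift (fun t => p ^ t * esym (S d) v t)) with
      (fun t => p ^ (S t) * (v 0%nat * e' t + e' (S t))) by reflexivity.
    rewrite (sum_d_ext (S d) _ (fun t => (p * v 0%nat) * (p ^ t * e' t) + p * (p ^ t * e' (S t))))
      by (intros; simpl; ring).
    rewrite sum_d_plus, !sum_d_scal.
    replace (shift (fun x => 1 + p * v x)) with (fun x => 1 + p * shift v x) by reflexivity.
    rewrite <- IHd. fold e'.
    assert (A : sum_d (S d) (fun t => p ^ t * e' t) = 1 + p * sum_d (S d) (fun t => p ^ t * e' (S t))).
    { rewrite sum_d_S. rewrite sum_d_Sr. unfold e'. rewrite (esym_gt d (shift v) (S d)) by lia.
      rewrite esym_0, Rmult_0_r, Rplus_0_r, <- sum_d_scal. simpl pow. rewrite Rmult_1_l. f_equal.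
      apply sum_d_ext. intros. unfold shift. simpl. ring. }
    rewrite A, esym_0. simpl pow. ring.
Qed.

Lemma cf_bound d t k : (0 < d)%nat -> (k <= d)%nat ->
  cf d t k <= binom d k * (INR k / INR d) ^ t.
Proof.
  intros Hd Hk. assert (Hd' : 0 < INR d) by (apply lt_0_INR; lia).
  assert (Hp : 0 <= INR k / INR d) by (apply Rdiv_le_0_compat; [apply pos_INR|lra]).
  unfold cf. destruct (Nat.leb_spec t k) as [Ht|Ht].
  2:{ apply Rmult_le_pos; [apply binom_nonneg|]. apply pow_le; lra. }
  induction t.
  - rewrite !Nat.sub_0_r. simpl. lra.
  - assert (IH := IHt ltac:(lia)).
    pose proof (binom_absorb (d - S t) (k - S t)) as Ab.
    replace (S (d - S t)) with (d - t)%nat in Ab by lia.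
    replace (S (k - S t)) with (k - t)%nat in Ab by lia.
    assert (Hkt : 0 < INR (k - t)) by (apply lt_0_INR; lia).
    assert (Hdt : 0 < INR (d - t)) by (apply lt_0_INR; lia).
    assert (E : binom (d - S t) (k - S t) = binom (d - t) (k - t) * INR (k - t) / INR (d - t)).
    { rewrite Ab. field. lra. }
    rewrite E.
    assert (R1 : INR (k - t) / INR (d - t) <= INR k / INR d).
    { apply Rdiv_le_cross; auto.
      rewrite !minus_INR by lia. assert (INR t <= INR k) by (apply le_INR; lia).
      assert (INR k <= INR d) by (apply le_INR; lia). pose proof (pos_INR t). nra. }
    unfold Rdiv at 1. rewrite Rmult_assoc. fold (Rdiv (INR (k - t)) (INR (d - t))).
    simpl pow.
    assert (0 <= binom (d - t) (k - t)) by apply binom_nonneg.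
    assert (0 <= INR (k - t) / INR (d - t)) by (apply Rdiv_le_0_compat; lra).
    assert (0 <= binom d k * (INR k / INR d) ^ t) by (apply Rmult_le_pos; [apply binom_nonneg|apply pow_le; lra]).
    replace (binom d k * (INR k / INR d * (INR k / INR d) ^ t)) with
      ((binom d k * (INR k / INR d) ^ t) * (INR k / INR d)) by ring.
    apply Rmult_le_compat; auto.
Qed.

Lemma EE_bound d k v : (0 < d)%nat -> (k <= d)%nat -> (forall x, (x < d)%nat -> 0 <= v x) ->
  EE d k (fun x => 1 + v x) <= binom d k * prod_d d (fun x => 1 + (INR k / INR d) * v x).
Proof.
  intros Hd Hk Hv. rewrite EE_identity, <- esym_gen, <- sum_d_scal.
  apply sum_d_le. intros t _. rewrite <- Rmult_assoc.
  apply Rmult_le_compat_r; [apply esym_nonneg; auto|]. apply cf_bound; auto.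
Qed.


Lemma sum_d_const n a : sum_d n (fun _ => a) = INR n * a.
Proof. induction n; [unfold sum_d; simpl; ring|]. rewrite sum_d_Sr, IHn, S_INR. ring. Qed.

Fixpoint sHb (b : bool) (H : list bool) (f : nat -> R) : R :=
  match H with
  | [] => 0
  | b' :: H' => (if Bool.eqb b' b then f 0%nat else 0) + sHb b H' (shift f)
  end.

Lemma sHb_sum_d b H f :
  sum_d (length H) (fun x => if Bool.eqb (memH H x) b then f x else 0) = sHb b H f.
Proof.
  revert f; induction H as [|b' H IH]; intros f; [reflexivity|].
  simpl length. rewrite sum_d_S. simpl. f_equal. rewrite <- IH. apply sum_d_ext. intros. reflexivity.
Qed.

Lemma length_filter_seq n (q : nat -> bool) :
  INR (length (filter q (seq 0 n))) = sum_d n (fun x => if q x then 1 else 0).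
Proof.
  induction n; [reflexivity|]. rewrite seq_S, filter_app, length_app, plus_INR, IHn, sum_d_Sr.
  simpl. destruct (q n); simpl; ring.
Qed.

Lemma sHb_count b H :
  INR (length (filter (fun x => Bool.eqb (memH H x) b) (seq 0 (length H)))) = sHb b H (fun _ => 1).
Proof. rewrite length_filter_seq, <- sHb_sum_d. apply sum_d_ext. intros. destruct (Bool.eqb _ _); auto. Qed.

Lemma sHb_true_1 H : sHb true H (fun _ => 1) = INR (count_occ bool_dec H true).
Proof. induction H as [|b H IH]; [reflexivity|]. simpl sHb. unfold shift. rewrite IH.
  destruct b. - rewrite count_occ_cons_eq by reflexivity. rewrite S_INR. simpl eqb. lra. - rewrite count_occ_cons_neq by discriminate. simpl eqb. lra. Qed.

Lemma sHb_split H f : sHb true H f + sHb false H f = sum_d (length H) f.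
Proof. revert f; induction H as [|b H IH]; intros f; [simpl; unfold sum_d; simpl; ring|].
  simpl sHb. simpl length. rewrite sum_d_S, <- IH. destruct b; simpl; ring. Qed.

Lemma sHb_1_split H : sHb false H (fun _ => 1) = INR (length H) - INR (count_occ bool_dec H true).
Proof. rewrite <- sHb_true_1. pose proof (sHb_split H (fun _ => 1)).
  rewrite sum_d_const in H0. lra. Qed.

Lemma sHb_plus b H f g : sHb b H (fun x => f x + g x) = sHb b H f + sHb b H g.
Proof. revert f g; induction H as [|b' H IH]; intros f g; simpl; [ring|].
  replace (shift (fun x => f x + g x)) with (fun x => shift f x + shift g x) by reflexivity.
  rewrite IH. destruct (Bool.eqb b' b); ring. Qed.

Lemma sHb_scal b H f c : sHb b H (fun x => c * f x) = c * sHb b H f.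
Proof. revert f; induction H as [|b' H IH]; intros f; simpl; [ring|].
  replace (shift (fun x => c * f x)) with (fun x => c * shift f x) by reflexivity.
  rewrite IH. destruct (Bool.eqb b' b); ring. Qed.

Lemma sHb_nonneg b H f : (forall x, (x < length H)%nat -> 0 <= f x) -> 0 <= sHb b H f.
Proof. revert f; induction H as [|b' H IH]; intros f Hf; simpl; [lra|].
  apply Rplus_le_le_0_compat. destruct (Bool.eqb b' b); [apply Hf; simpl; lia|lra].
  apply IH. intros; unfold shift; apply Hf; simpl; lia. Qed.

Lemma exp_sHb H f : exp (sHb true H f) = prodH H (fun x => exp (f x)).
Proof. revert f; induction H as [|b H IH]; intros f; simpl; [apply exp_0|].
  rewrite exp_plus, IH. destruct b; simpl; [|rewrite exp_0]; reflexivity. Qed.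

Lemma bool_lists_length d H : In H (bool_lists d) -> length H = d.
Proof. revert H; induction d; intros H Hin; simpl in Hin.
  - destruct Hin as [<-|[]]; reflexivity.
  - apply in_app_or in Hin. destruct Hin as [Hin|Hin]; apply in_map_iff in Hin;
    destruct Hin as [H' [<- Hin]]; simpl; f_equal; auto. Qed.

Lemma subk_prop d k H : In H (subk d k) -> length H = d /\ count_occ bool_dec H true = k.
Proof. unfold subk. intros Hin. apply filter_In in Hin. destruct Hin as [H1 H2].
  split; [now apply bool_lists_length|]. now apply Nat.eqb_eq. Qed.

Lemma prod_d_nonneg n f : (forall x, (x < n)%nat -> 0 <= f x) -> 0 <= prod_d n f.
Proof. revert f; induction n; intros f H; [unfold prod_d; simpl; lra|].
  rewrite prod_d_S. apply Rmult_le_pos; [apply H; lia|]. apply IHn. intros; unfold shift; apply H; lia. Qed.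

Lemma prod_d_le n f g : (forall x, (x < n)%nat -> 0 <= f x <= g x) -> prod_d n f <= prod_d n g.
Proof. revert f g; induction n; intros f g H; [unfold prod_d; simpl; lra|].
  rewrite !prod_d_S. assert (A := H 0%nat ltac:(lia)).
  assert (B : 0 <= prod_d n (shift f)).
  { apply prod_d_nonneg. intros; unfold shift; apply H; lia. }
  apply Rmult_le_compat; try lra. apply IHn. intros; unfold shift; apply H; lia. Qed.

Lemma prod_d_exp n f : prod_d n (fun x => exp (f x)) = exp (sum_d n f).
Proof. revert f; induction n; intros f; [unfold prod_d, sum_d; simpl; rewrite exp_0; ring|].
  rewrite prod_d_S, sum_d_S, exp_plus. f_equal. apply IHn. Qed.

Lemma argmin_ex d (f : nat -> R) : (0 < d)%nat -> exists x0, (x0 < d)%nat /\ forall x, (x < d)%nat -> f x0 <= f x.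
Proof. induction d; intros Hd; [lia|]. destruct d.
  - exists 0%nat; split; [lia|]. intros x Hx. replace x with 0%nat by lia. lra.
  - destruct (IHd ltac:(lia)) as [x0 [H1 H2]]. destruct (Rle_dec (f x0) (f (S d))).
    + exists x0. split; [lia|]. intros x Hx. destruct (Nat.eq_dec x (S d)); [subst; auto|]. apply H2; lia.
    + exists (S d). split; [lia|]. intros x Hx. destruct (Nat.eq_dec x (S d)); [subst; lra|].
      specialize (H2 x ltac:(lia)). lra. Qed.



Lemma prodH_ext H f g : (forall x, f x = g x) -> prodH H f = prodH H g.
Proof. revert f g; induction H as [|b H IH]; intros f g E; simpl; auto.
  rewrite E, (IH (shift f) (shift g)); auto. intros; unfold shift; auto. Qed.

Lemma decP_true {A} (P : A -> Prop) a : decP P a = true -> P a.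
Proof. unfold decP. destruct (excluded_middle_informative (P a)); auto; discriminate. Qed.

Lemma sHb_affine b H f a l : sHb b H (fun x => l * (f x - a)) = l * (sHb b H f - a * sHb b H (fun _ => 1)).
Proof. revert f; induction H as [|b' H IH]; intros f; simpl; [ring|].
  replace (shift (fun x => l * (f x - a))) with (fun x => l * (shift f x - a)) by reflexivity.
  rewrite IH. replace (shift (fun _ : nat => 1)) with (fun _ : nat => 1) by reflexivity.
  destruct (Bool.eqb b' b); ring. Qed.

Lemma sumL_zero {A} (L : list A) : sumL L (fun _ => 0) = 0.
Proof. induction L; unfold sumL in *; simpl; auto. rewrite IHL; ring. Qed.

Lemma conc (d m : nat) (c : nat -> R) (K w : R) :
  d = (2 * m)%nat -> (0 < m)%nat -> 1 < K -> 0 < w ->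
  (forall x, (x < d)%nat -> 0 <= c x) ->
  (forall x x', (x < d)%nat -> (x' < d)%nat -> c x <= K * c x') ->
  INR (length (filter (decP (fun H => sum_d d c / 2 * (1 + w) < sHb true H c)) (subk d m)))
    <= binom d m * exp (- (INR d * w ^ 2) / (2 * (K - 1) ^ 2)).
Proof.
  intros Hdm Hm HK Hw Hc0 HcK.
  set (T := sum_d d c).
  assert (HT0 : 0 <= T) by (apply sum_d_nonneg; auto).
  assert (Hbin : 0 <= binom d m * exp (- (INR d * w ^ 2) / (2 * (K - 1) ^ 2))).
  { apply Rmult_le_pos; [apply binom_nonneg|left; apply exp_pos]. }
  assert (Hsub : forall H, In H (subk d m) -> sHb true H c <= T /\ 0 <= sHb false H c).
  { intros H HH. destruct (subk_prop _ _ _ HH) as [Hl _].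
    pose proof (sHb_split H c). rewrite Hl in H0.
    assert (0 <= sHb false H c) by (apply sHb_nonneg; rewrite Hl; auto). unfold T. lra. }
  destruct (Req_dec T 0) as [HT|HT].
  - assert (INR (length (filter (decP (fun H => T / 2 * (1 + w) < sHb true H c)) (subk d m))) * 1
       <= sumL (subk d m) (fun _ => 0)).
    { apply count_le; [intros; lra|]. intros H HH Hp. apply decP_true in Hp.
      destruct (Hsub H HH). rewrite HT in Hp. lra. }
    rewrite sumL_zero in H.
    fold T. lra.
  - assert (HTp : 0 < T) by lra. clear HT.
    assert (Hd : (0 < d)%nat) by lia.
    assert (HdR : 0 < INR d) by (apply lt_0_INR; lia).
    destruct (argmin_ex d c Hd) as [x0 [Hx0 Hmin]]. set (a := c x0).
    assert (Ha0 : 0 <= a) by (apply Hc0; auto).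
    assert (HaT : INR d * a <= T).
    { rewrite <- sum_d_const. apply sum_d_le. intros; apply Hmin; auto. }
    assert (Hup : forall x, (x < d)%nat -> a <= c x <= K * a).
    { intros x Hx. split; [apply Hmin; auto|apply HcK; auto]. }
    set (R0 := K - 1). assert (HR0 : 0 < R0) by (unfold R0; lra).
    set (lam := 2 * w * INR d / (R0 ^ 2 * T)).
    assert (Hlam : 0 < lam).
    { unfold lam. apply Rdiv_lt_0_compat; [nra|]. apply Rmult_lt_0_compat; auto. apply pow_lt; auto. }
    set (z := fun x => lam * (c x - a)).
    assert (Hz : forall x, (x < d)%nat -> 0 <= z x <= lam * R0 * a).
    { intros x Hx. destruct (Hup x Hx). unfold z, R0. split; nra. }
    set (B := exp (lam * (T / 2 * (1 + w) - INR m * a))).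
    assert (HmR : INR d = 2 * INR m) by (rewrite Hdm, mult_INR; simpl; ring).
    assert (Count : INR (length (filter (decP (fun H => T / 2 * (1 + w) < sHb true H c)) (subk d m))) * B
             <= sumL (subk d m) (fun H => prodH H (fun x => 1 + (exp (z x) - 1)))).
    { apply count_le.
      - intros H _. rewrite (prodH_ext H _ (fun x => exp (z x))) by (intros; ring).
        rewrite <- exp_sHb. left; apply exp_pos.
      - intros H HH Hp. apply decP_true in Hp.
        rewrite (prodH_ext H _ (fun x => exp (z x))) by (intros; ring).
        rewrite <- exp_sHb. unfold B. 
        destruct (subk_prop _ _ _ HH) as [_ Hcnt].
        assert (E : sHb true H z = lam * (sHb true H c - INR m * a)).
        { unfold z. rewrite sHb_affine. rewrite sHb_true_1, Hcnt. ring. }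
        rewrite E. left. apply exp_increasing. apply Rmult_lt_compat_l; auto. lra. }
    assert (Bd : sumL (subk d m) (fun H => prodH H (fun x => 1 + (exp (z x) - 1)))
        <= binom d m * exp (lam * (T - INR d * a) / 2 + INR d * ((lam * R0 * a) ^ 2 / 8))).
    { change (sumL (subk d m) (fun H => prodH H (fun x => 1 + (exp (z x) - 1)))) with
        (EE d m (fun x => 1 + (exp (z x) - 1))).
      eapply Rle_trans; [apply EE_bound; try lia|].
      - intros x Hx. destruct (Hz x Hx). pose proof (exp_ineq1_le (z x)). lra.
      - apply Rmult_le_compat_l; [apply binom_nonneg|].
        eapply Rle_trans.
        + apply (prod_d_le d _ (fun x => exp (z x / 2 + z x * z x / 8))).
          intros x Hx. replace (INR m / INR d) with (1/2) by (rewrite HmR; field; apply not_0_INR; lia).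
          pose proof (hoeff_half (z x)). pose proof (exp_pos (z x)). split; lra.
        + rewrite prod_d_exp. 
          assert (sum_d d (fun x => z x / 2 + z x * z x / 8) <= lam * (T - INR d * a) / 2 + INR d * ((lam * R0 * a) ^ 2 / 8)).
          { rewrite sum_d_plus.
            assert (E1 : sum_d d (fun x => z x / 2) = lam * (T - INR d * a) / 2).
            { unfold z. rewrite (sum_d_ext d _ (fun x => (lam / 2) * c x + (- (lam/2) * a) * 1)) by (intros; field).
              rewrite sum_d_plus, !sum_d_scal, sum_d_const. fold T. field. }
            rewrite E1. apply Rplus_le_compat_l. rewrite <- sum_d_const. apply sum_d_le.
            intros x Hx. destruct (Hz x Hx). 
            assert (z x * z x <= (lam * R0 * a) ^ 2) by (simpl; nra). lra. }
          apply exp_le_exp; auto. }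
    set (E2 := lam * (T - INR d * a) / 2 + INR d * ((lam * R0 * a) ^ 2 / 8)) in *.
    set (X := lam * (T / 2 * (1 + w) - INR m * a)).
    set (N := INR (length (filter (decP (fun H => T / 2 * (1 + w) < sHb true H c)) (subk d m)))) in *.
    assert (HB : 0 < B) by apply exp_pos.
    assert (HN : N <= binom d m * exp (E2 - X)).
    { apply (Rmult_le_reg_r B); auto. unfold B. fold X. rewrite Rmult_assoc, <- exp_plus.
      replace (E2 - X + X) with E2 by ring. change (exp X) with B. lra. }
    eapply Rle_trans; [apply HN|]. apply Rmult_le_compat_l; [apply binom_nonneg|]. apply exp_le_exp.
    assert (Ea : a <= T / INR d) by (apply (Rmult_le_reg_l (INR d)); auto; field_simplify; lra).
    assert (Hsq : (lam * R0 * a) ^ 2 <= (lam * R0 * (T / INR d)) ^ 2).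
    { apply pow_incr. split.
      - apply Rmult_le_pos; [|auto]. apply Rmult_le_pos; lra.
      - apply Rmult_le_compat_l; auto. apply Rmult_le_pos; lra. }
    replace (E2 - X) with (- (lam * T * w / 2) + INR d * ((lam * R0 * a) ^ 2 / 8))
      by (unfold E2, X; rewrite HmR; field).
    replace (- (INR d * w ^ 2) / (2 * R0 ^ 2)) with
      (- (lam * T * w / 2) + INR d * ((lam * R0 * (T / INR d)) ^ 2 / 8))
      by (unfold lam, R0; field; split; lra).
    apply Rplus_le_compat_l. apply Rmult_le_compat_l; lra.
Qed.


Lemma consts (eps delta : R) (d n : nat) :
  0 < eps -> 0 < delta < 1 -> (0 < n)%nat ->
  INR d > 4 * (exp (2 * eps) - 1) ^ 2 * ln (12 * exp eps * INR n / delta) ->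
  let epsp := (exp (2 * eps) - 1) * sqrt (16 / INR d * ln (24 * exp eps * INR n / delta)) in
  let w := epsp / 5 in
  0 < INR d /\ 0 < w /\ w <= 1 /\ 1 + w <= exp epsp * (1 - w) /\
  exp (- (INR d * w ^ 2) / (2 * (exp eps - 1) ^ 2)) <= delta / (24 * exp eps * INR n).
Proof.
  intros He Hdl Hn Hd epsp w.
  set (K := exp eps).
  assert (HK : 1 < K) by (unfold K; rewrite <- exp_0; apply exp_increasing; auto).
  assert (HK2 : exp (2 * eps) = K * K) by (unfold K; rewrite <- exp_plus; f_equal; ring).
  assert (HnR : 1 <= INR n) by (apply (le_INR 1); lia).
  set (A := 12 * K * INR n / delta).
  assert (HA : 12 < A).
  { unfold A. apply (Rmult_lt_reg_r delta); [lra|]. unfold Rdiv. rewrite Rmult_assoc, Rinv_l by lra.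
    assert (12 * delta < 12) by lra. assert (12 <= 12 * K * INR n) by nra. lra. }
  set (L0 := ln A).
  assert (HL0 : ln 2 < L0) by (unfold L0; apply ln_increasing; lra).
  assert (Hln2 : 0 < ln 2) by (rewrite <- ln_1; apply ln_increasing; lra).
  assert (EL : ln (24 * K * INR n / delta) = ln 2 + L0).
  { unfold L0. rewrite <- ln_mult by lra. f_equal. unfold A. field. lra. }
  set (L := ln (24 * K * INR n / delta)) in *.
  assert (HL : 0 < L) by lra.
  assert (HLL : L <= 2 * L0) by lra.
  fold K in Hd. fold A in Hd. fold L0 in Hd. rewrite HK2 in Hd.
  assert (HdR : 0 < INR d).
  { assert (0 < (K * K - 1) ^ 2) by (apply pow_lt; nra). nra. }
  assert (Hsq : 0 <= 16 / INR d * L) by (apply Rmult_le_pos; [apply Rdiv_le_0_compat|]; lra).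
  set (s := sqrt (16 / INR d * L)).
  assert (Hs2 : s * s = 16 / INR d * L) by (apply sqrt_sqrt; auto).
  assert (Hs : 0 < s) by (apply sqrt_lt_R0; apply Rmult_lt_0_compat; [apply Rdiv_lt_0_compat|]; lra).
  assert (Hep : epsp = (K * K - 1) * s) by (unfold epsp, s; rewrite HK2; reflexivity).
  assert (HKK : 0 < K * K - 1) by nra.
  assert (Hepp : 0 < epsp) by (rewrite Hep; nra).
  assert (Hep2 : epsp * epsp < 8).
  { rewrite Hep. replace ((K * K - 1) * s * ((K * K - 1) * s)) with ((K*K-1)^2 * (s * s)) by ring.
    rewrite Hs2. apply (Rmult_lt_reg_r (INR d)); auto.
    replace ((K * K - 1) ^ 2 * (16 / INR d * L) * INR d) with ((K * K - 1) ^ 2 * 16 * L) by (field; lra).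
    assert (0 < (K * K - 1) ^ 2) by (apply pow_lt; lra).
    assert ((K * K - 1) ^ 2 * 16 * L <= (K * K - 1) ^ 2 * 32 * L0) by nra.
    nra. }
  assert (Hw3 : epsp < 3) by nra.
  unfold w. repeat split; try lra.
  - pose proof (exp_ineq1_le epsp). nra.
  - fold K. assert (E : - (INR d * (epsp / 5) ^ 2) / (2 * (K - 1) ^ 2) = - (16 * L * (K + 1) ^ 2 / 50)).
    { rewrite Hep. replace (((K * K - 1) * s / 5) ^ 2) with ((K*K-1)^2 * (s * s) / 25) by field.
      rewrite Hs2. field. split; lra. }
    rewrite E.
    assert (HL' : L <= 16 * L * (K + 1) ^ 2 / 50) by nra.
    apply Rle_trans with (exp (- L)).
    + apply exp_le_exp. lra.
    + unfold L. rewrite exp_Ropp, exp_ln by (apply Rdiv_lt_0_compat; nra).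
      apply Req_le. field. split; [lra|]. split; lra.
Qed.


Lemma sum_f_R0_mono f N N' : (forall k, 0 <= f k) -> (N <= N')%nat -> sum_f_R0 f N <= sum_f_R0 f N'.
Proof. intros Hf Hle. induction Hle; [lra|]. simpl. pose proof (Hf (S m)). lra. Qed.

Lemma sum_f_R0_nonneg f N : (forall k, 0 <= f k) -> 0 <= sum_f_R0 f N.
Proof. intros Hf. induction N; simpl; [apply Hf|]. pose proof (Hf (S N)). lra. Qed.

Lemma partial_le_lim f l N : (forall k, 0 <= f k) -> infinite_sum f l -> sum_f_R0 f N <= l.
Proof.
  intros Hf Hl. destruct (Rle_dec (sum_f_R0 f N) l) as [H|H]; auto. exfalso.
  destruct (Hl (sum_f_R0 f N - l)) as [N0 HN0]; [lra|].
  specialize (HN0 (max N N0) ltac:(lia)).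
  assert (sum_f_R0 f N <= sum_f_R0 f (max N N0)) by (apply sum_f_R0_mono; auto; lia).
  unfold Rdist in HN0. apply Rabs_def2 in HN0. lra.
Qed.

Lemma lim_le f a C : infinite_sum f a -> (forall N, sum_f_R0 f N <= C) -> a <= C.
Proof.
  intros Ha HC. destruct (Rle_dec a C) as [H|H]; auto. exfalso.
  destruct (Ha (a - C)) as [N0 HN0]; [lra|].
  specialize (HN0 N0 ltac:(lia)). specialize (HC N0).
  unfold Rdist in HN0. apply Rabs_def2 in HN0. lra.
Qed.

Lemma lim_nonneg f a : (forall k, 0 <= f k) -> infinite_sum f a -> 0 <= a.
Proof.
  intros Hf Ha. destruct (Rle_dec 0 a) as [H|H]; auto. exfalso.
  destruct (Ha (- a)) as [N0 HN0]; [lra|].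
  specialize (HN0 N0 ltac:(lia)). pose proof (sum_f_R0_nonneg f N0 Hf).
  unfold Rdist in HN0. apply Rabs_def2 in HN0. lra.
Qed.

Lemma restrict_singleton_sum p y N :
  sum_f_R0 (restrict p (fun z => z = y)) N = if Nat.leb y N then p y else 0.
Proof.
  induction N; simpl.
  - unfold restrict. destruct (excluded_middle_informative (0%nat = y)); destruct y; simpl; auto; try lia; congruence.
  - rewrite IHN. unfold restrict. destruct (excluded_middle_informative (S N = y)).
    + subst. replace (Nat.leb (S N) N) with false by (symmetry; apply Nat.leb_gt; lia).
      rewrite Nat.leb_refl. ring.
    + destruct (Nat.leb_spec y N); destruct (Nat.leb_spec y (S N)); try lia; try ring.
Qed.

Lemma PrIs_singleton p y : PrIs p (fun z => z = y) (p y).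
Proof.
  unfold PrIs, infinite_sum. intros e He. exists y. intros n Hn.
  rewrite restrict_singleton_sum. replace (Nat.leb y n) with true by (symmetry; apply Nat.leb_le; lia).
  unfold Rdist. rewrite Rminus_diag, Rabs_R0. lra.
Qed.


Definition ind {A} (P : A -> Prop) (a : A) : R := if decP P a then 1 else 0.

Lemma ind_nonneg {A} (P : A -> Prop) a : 0 <= ind P a.
Proof. unfold ind. destruct (decP P a); lra. Qed.

Lemma ind_true {A} (P : A -> Prop) a : P a -> ind P a = 1.
Proof. unfold ind, decP. destruct (excluded_middle_informative (P a)); tauto. Qed.

Lemma count_filter_decP {A} (P : A -> Prop) L : INR (length (filter (decP P) L)) = sumL L (ind P).
Proof. induction L; [reflexivity|]. simpl. unfold sumL in *. simpl. rewrite <- IHL. unfold ind.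
  destruct (decP P a); simpl length; [rewrite S_INR|]; ring. Qed.

Lemma sumL_filter {A} (q : A -> bool) L F : sumL (filter q L) F = sumL L (fun a => if q a then F a else 0).
Proof. induction L; [reflexivity|]. simpl. destruct (q a); unfold sumL in *; simpl; rewrite IHL; ring. Qed.

Lemma sumL_map {A B} (f : A -> B) L F : sumL (map f L) F = sumL L (fun a => F (f a)).
Proof. induction L; [reflexivity|]. unfold sumL in *; simpl; rewrite IHL; ring. Qed.

Lemma sumL_bool_negb d F : sumL (bool_lists d) F = sumL (bool_lists d) (fun H => F (map negb H)).
Proof.
  revert F; induction d; intros F; [reflexivity|]. simpl bool_lists. rewrite !sumL_app, !sumL_map.
  rewrite (IHd (fun a => F (true :: a))), (IHd (fun a => F (false :: a))). simpl. ring.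
Qed.

Lemma count_negb H : count_occ bool_dec (map negb H) true = (length H - count_occ bool_dec H true)%nat.
Proof. induction H as [|b H IH]; [reflexivity|]. destruct b; simpl map.
  - rewrite count_occ_cons_neq by discriminate. rewrite count_occ_cons_eq by reflexivity. simpl. lia.
  - rewrite count_occ_cons_eq by reflexivity. rewrite count_occ_cons_neq by discriminate.
    pose proof (count_occ_bound bool_dec true H). simpl length. lia. Qed.

Lemma sHb_negb H f : sHb false H f = sHb true (map negb H) f.
Proof. revert f; induction H as [|b H IH]; intros f; [reflexivity|]. simpl. rewrite IH. destruct b; reflexivity. Qed.

Lemma decP_iff {A} (P Q : A -> Prop) a : (P a <-> Q a) -> decP P a = decP Q a.
Proof. unfold decP. intros E. destruct (excluded_middle_informative (P a)); destruct (excluded_middle_informative (Q a)); tauto. Qed.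

Lemma subk_sym d m (P : list bool -> Prop) : d = (2 * m)%nat ->
  INR (length (filter (decP P) (subk d m))) = INR (length (filter (decP (fun H => P (map negb H))) (subk d m))).
Proof.
  intros Hdm. rewrite !count_filter_decP. unfold subk. rewrite !sumL_filter.
  rewrite sumL_bool_negb. apply sumL_ext. intros H HH. apply bool_lists_length in HH.
  rewrite count_negb, HH.
  replace (Nat.eqb (d - count_occ bool_dec H true) m) with (Nat.eqb (count_occ bool_dec H true) m).
  - reflexivity.
  - pose proof (count_occ_bound bool_dec true H). rewrite HH in H0.
    destruct (Nat.eqb_spec (count_occ bool_dec H true) m); destruct (Nat.eqb_spec (d - count_occ bool_dec H true) m); auto; lia.
Qed.

Lemma conc_b (b : bool) (d m : nat) (c : nat -> R) (K w : R) :
  d = (2 * m)%nat -> (0 < m)%nat -> 1 < K -> 0 < w ->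
  (forall x, (x < d)%nat -> 0 <= c x) ->
  (forall x x', (x < d)%nat -> (x' < d)%nat -> c x <= K * c x') ->
  INR (length (filter (decP (fun H => sum_d d c / 2 * (1 + w) < sHb b H c)) (subk d m)))
    <= binom d m * exp (- (INR d * w ^ 2) / (2 * (K - 1) ^ 2)).
Proof.
  intros. destruct b; [apply conc; auto|].
  rewrite (subk_sym d m _ H). 
  rewrite (filter_ext (decP (fun H1 => sum_d d c / 2 * (1 + w) < sHb false (map negb H1) c))
     (decP (fun H1 => sum_d d c / 2 * (1 + w) < sHb true H1 c))).
  - apply conc; auto.
  - intros a. apply decP_iff. rewrite sHb_negb, map_map, (map_ext (fun x => negb (negb x)) (fun x => x)), map_id.
    + tauto.
    + apply negb_involutive.
Qed.

Lemma maxN {A} (L : list A) (F : A -> nat -> R) (dl : R) :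
  (forall a N N', In a L -> (N <= N')%nat -> F a N <= F a N') ->
  exists N0, forall a, In a L -> (exists N, dl < F a N) -> dl < F a N0.
Proof.
  intros Hm. induction L as [|a L IH].
  - exists 0%nat. intros a [].
  - destruct IH as [N1 HN1]; [intros; apply Hm; simpl; auto|].
    destruct (classic (exists N, dl < F a N)) as [[Na HNa]|Hno].
    + exists (max N1 Na). intros a' [<-|Hin] Hex.
      * apply Rlt_le_trans with (F a Na); [apply HNa|]. apply Hm; simpl; auto; lia.
      * apply Rlt_le_trans with (F a' N1); [apply HN1; auto|]. apply Hm; simpl; auto; lia.
    + exists N1. intros a' [<-|Hin] Hex; [contradiction|]. auto.
Qed.

Lemma swap_sumL_sumf {A} (L : list A) (G : A -> nat -> R) N :
  sumL L (fun a => sum_f_R0 (G a) N) = sum_f_R0 (fun y => sumL L (fun a => G a y)) N.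
Proof. induction N; simpl; [reflexivity|]. rewrite sumL_plus, IHN. reflexivity. Qed.

Lemma swap_sumd_sumf n (G : nat -> nat -> R) N :
  sum_d n (fun x => sum_f_R0 (G x) N) = sum_f_R0 (fun y => sum_d n (fun x => G x y)) N.
Proof. induction N; simpl; [reflexivity|]. rewrite sum_d_plus, IHN. reflexivity. Qed.

Lemma swap_sumL_sumd {A} (L : list A) (F : A -> nat -> R) n :
  sumL L (fun a => sum_d n (F a)) = sum_d n (fun i => sumL L (fun a => F a i)).
Proof. induction L; unfold sumL in *; simpl.
  - rewrite sum_d_zero. reflexivity.
  - rewrite IHL, <- sum_d_plus. reflexivity. Qed.

Lemma sum_d_ge_term n f i : (forall x, (x < n)%nat -> 0 <= f x) -> (i < n)%nat -> f i <= sum_d n f.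
Proof. induction n; intros Hf Hi; [lia|]. rewrite sum_d_Sr.
  assert (0 <= sum_d n f) by (apply sum_d_nonneg; intros; apply Hf; lia).
  destruct (Nat.eq_dec i n); [subst; lra|].
  assert (f i <= sum_d n f) by (apply IHn; [intros; apply Hf; lia|lia]).
  assert (0 <= f n) by (apply Hf; lia). lra. Qed.

Lemma sum_f_R0_comb f1 f2 g e N : (forall y, f1 y <= e * f2 y + g y) ->
  sum_f_R0 f1 N <= e * sum_f_R0 f2 N + sum_f_R0 g N.
Proof. intros H. induction N; simpl; [apply H|]. pose proof (H (S N)). lra. Qed.

Lemma sum_f_R0_scal_le f c N : sum_f_R0 (fun y => c * f y) N = c * sum_f_R0 f N.
Proof. induction N; simpl; [reflexivity|]. rewrite IHN. ring. Qed.


Lemma mixture_formula d m H b (Rz : nat -> nat -> R) y :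
  d = (2 * m)%nat -> In H (subk d m) ->
  mixture d H b Rz y = sHb b H (fun x => Rz x y) / INR m.
Proof.
  intros Hdm HH. destruct (subk_prop _ _ _ HH) as [Hl Hc].
  unfold mixture. rewrite <- Hl at 1. rewrite sHb_sum_d. f_equal.
  rewrite <- Hl. rewrite sHb_count. destruct b.
  - rewrite sHb_true_1, Hc. reflexivity.
  - rewrite sHb_1_split, Hc, Hl, Hdm, mult_INR. simpl. ring.
Qed.

Theorem mainTheorem9
  (eps delta : R) (d n : nat) (Rs : nat -> nat -> nat -> R)
  (Heps : 0 < eps) (Hdelta : 0 < delta < 1)
  (Hn : (0 < n)%nat)
  (Hdeven : Nat.Even d)
  (Hd : INR d > 4 * (exp (2 * eps) - 1) ^ 2 * ln (12 * exp eps * INR n / delta))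
  (HR : forall i, (i < n)%nat -> randomizer d (Rs i))
  (Hpriv : forall i, (i < n)%nat -> private (in_range d) (Rs i) eps 0) :
  prob_H d (fun H => forall i, (i < n)%nat ->
     private (fun _ : bool => True) (Q_HR d H (Rs i))
       ((exp (2 * eps) - 1) *
          sqrt (16 / INR d * ln (24 * exp eps * INR n / delta)))
       delta)
  > 2 / 3.
Proof.
  pose proof (consts eps delta d n Heps Hdelta Hn Hd) as Hc. cbv zeta in Hc.
  set (epsp := (exp (2 * eps) - 1) * sqrt (16 / INR d * ln (24 * exp eps * INR n / delta))) in *.
  set (w := epsp / 5) in *.
  destruct Hc as [HdR [Hw [Hw1 [Hwe Hexp]]]].
  set (K := exp eps) in *.
  assert (HK : 1 < K) by (unfold K; rewrite <- exp_0; apply exp_increasing; auto).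
  destruct Hdeven as [m Hdm].
  assert (Hm : (0 < m)%nat) by (destruct m; [subst; simpl in HdR; lra|lia]).
  assert (Hhalf : half_subsets d = subk d m).
  { unfold half_subsets, subk. replace (Nat.div d 2) with m; [reflexivity|].
    rewrite Hdm, Nat.mul_comm, Nat.div_mul; lia. }
  assert (HmR : INR d = 2 * INR m) by (rewrite Hdm, mult_INR; simpl; ring).
  assert (HmR0 : 0 < INR m) by lra.
  assert (Hepsp : 0 < epsp) by (unfold w in Hw; lra).
  assert (Hnn : forall i x y, (i < n)%nat -> (x < d)%nat -> 0 <= Rs i x y).
  { intros i x y Hi Hx. destruct (HR i Hi x Hx) as [H0 _]. apply H0. }
  assert (Hratio : forall i x x' y, (i < n)%nat -> (x < d)%nat -> (x' < d)%nat -> Rs i x y <= K * Rs i x' y).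
  { intros i x x' y Hi Hx Hx'. pose proof (Hpriv i Hi x x' Hx Hx' (fun z => z = y) _ _
      (PrIs_singleton _ y) (PrIs_singleton _ y)). unfold K. lra. }
  assert (Hmixnn : forall i H b y, (i < n)%nat -> In H (subk d m) -> 0 <= mixture d H b (Rs i) y).
  { intros i H b y Hi HH. rewrite (mixture_formula d m) by auto. apply Rdiv_le_0_compat; auto.
    apply sHb_nonneg. destruct (subk_prop _ _ _ HH) as [Hl _]. rewrite Hl. intros; apply Hnn; auto. }
  set (g := fun (b : bool) i H y => if Rlt_dec (exp epsp * mixture d H (negb b) (Rs i) y) (mixture d H b (Rs i) y)
                                   then mixture d H b (Rs i) y else 0).
  set (bad := fun (b : bool) i H => exists N, delta < sum_f_R0 (g b i H) N).
  assert (Hgnn : forall b i H y, (i < n)%nat -> In H (subk d m) -> 0 <= g b i H y).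
  { intros b i H y Hi HH. unfold g. destruct (Rlt_dec _ _); [apply Hmixnn; auto|lra]. }
  assert (Key1 : forall i H, (i < n)%nat -> In H (subk d m) -> ~ bad true i H -> ~ bad false i H ->
            private (fun _ : bool => True) (Q_HR d H (Rs i)) epsp delta).
  { intros i H Hi HH nb1 nb2 x x' _ _ S a b Ha Hb. unfold Q_HR in *.
    assert (Hrnn : forall z y, 0 <= restrict (mixture d H z (Rs i)) S y).
    { intros z y. unfold restrict. destruct (excluded_middle_informative (S y)); [apply Hmixnn; auto|lra]. }
    assert (He1 : 1 <= exp epsp) by (rewrite <- exp_0; apply exp_le_exp; lra).
    destruct (Bool.bool_dec x x') as [<-|Hne].
    - assert (a = b) by (eapply uniqueness_sum; eauto). subst b.
      assert (0 <= a) by (eapply lim_nonneg; [|apply Ha]; auto). nra.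
    - assert (Hx' : x' = negb x) by (destruct x, x'; simpl; congruence). subst x'.
      assert (nb : forall N, sum_f_R0 (g x i H) N <= delta).
      { intros N. apply Rnot_lt_le. intros Hlt. destruct x; [apply nb1|apply nb2]; exists N; auto. }
      apply lim_le with (f := restrict (mixture d H x (Rs i)) S); auto.
      intros N. eapply Rle_trans.
      + apply (sum_f_R0_comb _ (restrict (mixture d H (negb x) (Rs i)) S) (g x i H) (exp epsp)).
        intros y. unfold restrict, g. destruct (excluded_middle_informative (S y)).
        * destruct (Rlt_dec _ _) as [Hl|Hl].
          -- pose proof (Hmixnn i H (negb x) y Hi HH). nra.
          -- lra.
        * destruct (Rlt_dec _ _); [|lra]. pose proof (Hmixnn i H x y Hi HH). lra.
      + pose proof (partial_le_lim _ b N (Hrnn (negb x)) Hb). pose proof (nb N). nra. }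
  assert (Key2 : forall b i, (i < n)%nat ->
            INR (length (filter (decP (bad b i)) (subk d m))) <= INR (length (subk d m)) / (12 * INR n)).
  { intros b i Hi.
    destruct (maxN (subk d m) (fun H N => sum_f_R0 (g b i H) N) delta) as [N0 HN0].
    { intros H N N' HH Hle. apply sum_f_R0_mono; auto. }
    set (NB := INR (length (filter (decP (bad b i)) (subk d m)))).
    set (NH := INR (length (subk d m))).
    assert (C1 : NB * delta <= sumL (subk d m) (fun H => sum_f_R0 (g b i H) N0)).
    { apply count_le.
      - intros H HH. apply sum_f_R0_nonneg. intros; auto.
      - intros H HH Hp. apply decP_true in Hp. left. apply HN0; auto. }
    rewrite swap_sumL_sumf in C1.
    set (T := fun y => sum_d d (fun x => Rs i x y)).
    set (C := NH * (delta / (24 * K * INR n))).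
    assert (HT : forall y, 0 <= T y) by (intros; apply sum_d_nonneg; intros; apply Hnn; auto).
    assert (Dy : forall y, sumL (subk d m) (fun H => g b i H y) <= (T y / INR m) * C).
    { intros y. set (c := fun x => Rs i x y).
      apply Rle_trans with (sumL (subk d m) (fun H => (T y / INR m) *
          ind (fun H => sum_d d c / 2 * (1 + w) < sHb b H c) H)).
      - apply sumL_le. intros H HH.
        destruct (subk_prop _ _ _ HH) as [Hl _].
        assert (Hs0 : 0 <= sHb b H c) by (apply sHb_nonneg; rewrite Hl; intros; apply Hnn; auto).
        assert (Ht0 : 0 <= sHb (negb b) H c) by (apply sHb_nonneg; rewrite Hl; intros; apply Hnn; auto).
        assert (Hst : sHb b H c + sHb (negb b) H c = T y).
        { pose proof (sHb_split H c) as Sp. rewrite Hl in Sp. unfold T. fold c. destruct b; simpl; lra. }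
        unfold g. rewrite !(mixture_formula d m H _ (Rs i) y Hdm HH). fold c.
        destruct (Rlt_dec _ _) as [Hlt|Hlt].
        + rewrite ind_true.
          * rewrite Rmult_1_r. unfold Rdiv. apply Rmult_le_compat_r; [left; apply Rinv_0_lt_compat; auto|]. lra.
          * fold (T y). apply Rnot_le_lt. intros Hle. apply (Rlt_not_le _ _ Hlt).
            assert (He : 0 < exp epsp) by apply exp_pos.
            assert (ETc : T y = sum_d d c) by reflexivity. rewrite <- ETc in Hle.
            assert (sHb b H c <= exp epsp * sHb (negb b) H c).
            { assert (T y / 2 * (1 + w) <= exp epsp * (T y / 2 * (1 - w))).
              { pose proof (HT y). replace (exp epsp * (T y / 2 * (1 - w))) with (T y / 2 * (exp epsp * (1 - w))) by ring.
                apply Rmult_le_compat_l; lra. }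
              assert (exp epsp * (T y / 2 * (1 - w)) <= exp epsp * sHb (negb b) H c).
              { apply Rmult_le_compat_l; [lra|]. nra. }
              lra. }
            unfold Rdiv. rewrite <- Rmult_assoc. apply Rmult_le_compat_r; [left; apply Rinv_0_lt_compat; auto|]. lra.
        + apply Rmult_le_pos; [apply Rdiv_le_0_compat; auto|apply ind_nonneg].
      - rewrite sumL_scal, <- count_filter_decP. apply Rmult_le_compat_l.
        + apply Rdiv_le_0_compat; auto.
        + eapply Rle_trans; [apply (conc_b b d m c K w Hdm Hm HK Hw)|].
          * intros; apply Hnn; auto.
          * intros; apply Hratio; auto.
          * unfold C, NH. rewrite length_subk. apply Rmult_le_compat_l; [apply binom_nonneg|]. auto. }
    assert (E : sum_f_R0 (fun y => sumL (subk d m) (fun H => g b i H y)) N0 <= 2 * C).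
    { eapply Rle_trans; [apply sum_Rle; intros; apply Dy|].
      rewrite (sum_eq _ (fun y => (C / INR m) * T y)) by (intros; unfold Rdiv; ring).
      rewrite sum_f_R0_scal_le. unfold T. rewrite <- swap_sumd_sumf.
      assert (sum_d d (fun x => sum_f_R0 (fun y => Rs i x y) N0) <= INR d).
      { rewrite <- (Rmult_1_r (INR d)), <- sum_d_const. apply sum_d_le. intros x Hx.
        destruct (HR i Hi x Hx) as [H0 H1]. apply partial_le_lim; auto. }
      assert (0 <= C) by (unfold C, NH; apply Rmult_le_pos; [apply pos_INR|]; apply Rdiv_le_0_compat; [lra|];
        apply Rmult_lt_0_compat; [lra|]; apply lt_0_INR; auto).
      apply Rle_trans with (C / INR m * INR d).
      - apply Rmult_le_compat_l; auto. apply Rdiv_le_0_compat; auto.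
      - rewrite HmR. apply Req_le. field. lra. }
    assert (NB * delta <= NH / (12 * INR n) * delta).
    { assert (HnR : 0 < INR n) by (apply lt_0_INR; auto).
      assert (0 <= NH / (12 * INR n) * delta) by (apply Rmult_le_pos; [apply Rdiv_le_0_compat; [apply pos_INR|lra]|lra]).
      assert (2 * C = (NH / (12 * INR n) * delta) / K) by (unfold C; field; split; lra).
      assert ((NH / (12 * INR n) * delta) / K <= NH / (12 * INR n) * delta).
      { apply (Rmult_le_reg_r K); [lra|]. unfold Rdiv at 1. rewrite Rmult_assoc, Rinv_l by lra. nra. }
      lra. }
    apply (Rmult_le_reg_r delta); lra. }
  unfold prob_H. rewrite Hhalf.
  set (P := fun H : list bool => forall i : nat, (i < n)%nat ->
         private (fun _ : bool => True) (Q_HR d H (Rs i)) epsp delta).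
  set (NH := INR (length (subk d m))).
  assert (HNH : 0 < NH) by (unfold NH; rewrite length_subk; apply binom_pos; lia).
  set (NB := fun i => INR (length (filter (decP (bad true i)) (subk d m))) +
                      INR (length (filter (decP (bad false i)) (subk d m)))).
  assert (Cov : NH <= INR (length (filter (decP P) (subk d m))) + sum_d n NB).
  { unfold NB, NH. rewrite (sum_d_ext n _ (fun i => sumL (subk d m) (fun H => ind (bad true i) H + ind (bad false i) H))).
    2:{ intros i _. rewrite !count_filter_decP, sumL_plus. reflexivity. }
    rewrite <- swap_sumL_sumd, count_filter_decP, <- sumL_plus, <- sumL_const1.
    apply sumL_le. intros H HH.
    assert (Hs : 0 <= sum_d n (fun i => ind (bad true i) H + ind (bad false i) H)).
    { apply sum_d_nonneg. intros. pose proof (ind_nonneg (bad true x) H). pose proof (ind_nonneg (bad false x) H). lra. }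
    destruct (classic (P H)) as [HP|HP].
    - rewrite ind_true by auto. lra.
    - assert (exists i, (i < n)%nat /\ (bad true i H \/ bad false i H)) as [i [Hi Hb]].
      { apply NNPP. intros Hno. apply HP. intros i Hi. apply Key1; auto.
        - intros Hb. apply Hno. exists i. auto.
        - intros Hb. apply Hno. exists i. auto. }
      assert (1 <= ind (bad true i) H + ind (bad false i) H).
      { pose proof (ind_nonneg (bad true i) H). pose proof (ind_nonneg (bad false i) H).
        destruct Hb as [Hb|Hb]; [rewrite (ind_true (bad true i) H Hb)|rewrite (ind_true (bad false i) H Hb)]; lra. }
      pose proof (sum_d_ge_term n (fun i => ind (bad true i) H + ind (bad false i) H) i) as Ht.
      assert (0 <= ind P H) by apply ind_nonneg.
      assert (1 <= sum_d n (fun i => ind (bad true i) H + ind (bad false i) H)).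
      { eapply Rle_trans; [|apply Ht; auto]. auto.
        intros. pose proof (ind_nonneg (bad true x) H). pose proof (ind_nonneg (bad false x) H). lra. }
      lra. }
  assert (HnR : 0 < INR n) by (apply lt_0_INR; auto).
  assert (SB : sum_d n NB <= NH / 6).
  { apply Rle_trans with (sum_d n (fun _ => 2 * (NH / (12 * INR n)))).
    - apply sum_d_le. intros i Hi. unfold NB. pose proof (Key2 true i Hi). pose proof (Key2 false i Hi).
      unfold NH. lra.
    - rewrite sum_d_const. apply Req_le. field. lra. }
  apply Rlt_gt. apply (Rmult_lt_reg_r NH); auto. unfold Rdiv at 2. rewrite Rmult_assoc, Rinv_l by lra. lra.
Qed.
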